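(* For each hybrid knowledge base with function symbols $\mathcal{K}$, the operator $\mathrm{IFP}_{\mathcal{K}}$ defined by $\mathrm{IFP}_{\mathcal{K}}(\mathcal{I})=\langle \mathrm{lfp}(T^{\mathcal{K}}_{\mathcal{I}}),\ \mathrm{gfp}(F^{\mathcal{K}}_{\mathcal{I}})\rangle$ on 3-valued interpretations $\mathcal{I}$ for $\mathcal{K}$ is monotonic with respect to $\le$: if $\mathcal{I}\le\mathcal{I}'$ then $\mathrm{IFP}_{\mathcal{K}}(\mathcal{I})\le\mathrm{IFP}_{\mathcal{K}}(\mathcal{I}')$.
   Context: A hybrid knowledge base with function symbols (HKBFS) is a pair $\mathcal{K}=\langle\mathcal{O},\mathcal{P}\rangle$ where $\mathcal{O}$ is a set of description logic axioms (e.g. in $\mathcal{ALC}$) and $\mathcal{P}$ is a finite set of normal logic programming rules $h\leftarrow a_1,\dots,a_n,\mathit{not}\,b_1,\dots,\mathit{not}\,b_r$ whose terms may contain function symbols. The grounding of $\mathcal{P}$ replaces variables of each rule by ground terms (built from the constants and function symbols of $\mathcal{K}$) in all possible ways. $\mathrm{KA}(\mathcal{K})$ is the set of ground atoms occurring in the grounding of $\mathcal{P}$. $\pi(\mathcal{O})$ is the standard first-order translation of the DL axioms, and $O_{\mathcal{K},S}=\{\pi(\mathcal{O})\}\cup S$ for $S\subseteq\mathrm{KA}(\mathcal{K})$; $\models$ is first-order entailment. A 3-valued interpretation for $\mathcal{K}$ is a pair $\langle I_T,I_F\rangle$ of disjoint subsets of $\mathrm{KA}(\mathcal{K})$; $a$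 is true in it if $a\in I_T$, false if $a\in I_F$, undefined otherwise; $\langle I_T,I_F\rangle\le\langle I_T',I_F'\rangle$ iff $I_T\subseteq I_T'$ and $I_F\subseteq I_F'$. For $\mathcal{I}=\langle I_T,I_F\rangle$, the operators on subsets of $\mathrm{KA}(\mathcal{K})$ are: $T^{\mathcal{K}}_{\mathcal{I}}(Tr)=\{a\in\mathrm{KA}(\mathcal{K})\mid$ there is a clause $a\leftarrow a_1,\dots,a_n,\mathit{not}\,b_1,\dots,\mathit{not}\,b_r$ in the grounding of $\mathcal{P}$ such that each $a_i$ is true in $\mathcal{I}$ or $a_i\in Tr$, and each $b_j$ is false in $\mathcal{I}\}\cup\{a\in\mathrm{KA}(\mathcal{K})\mid O_{\mathcal{K},I_T\cup Tr}\models a\}$; $F^{\mathcal{K}}_{\mathcal{I}}(Fa)=\{a\in\mathrm{KA}(\mathcal{K})\mid O_{\mathcal{K},I_T}\models\neg a$, or for every clause $a\leftarrow a_1,\dots,a_n,\mathit{not}\,b_1,\dots,\mathit{not}\,b_r$ in the grounding of $\mathcal{P}$ there is some $i$ with $a_i$ false in $\mathcal{I}$ or $a_i\in Fa$, or some $j$ with $b_j$ true in $\mathcal{I}\}\cap\{a\in\mathrm{KA}(\mathcal{K})\mid O_{\mathcal{K},\mathrm{KA}(\mathcal{K})\setminus(I_F\cup Fa)}\not\models a\}$. Both operators are monotonic in their argument (w.r.t. set inclusion), so $\mathrm{lfp}(T^{\mathcal{K}}_{\mathcal{I}})$ (least fixpoint) and $\mathrm{gfp}(F^{\mathcal{K}}_{\mathcal{I}})$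 (greatest fixpoint) exist. *)

(* Defs.v *)
From Stdlib Require Import List.
Import ListNotations.

(* Variables, function symbols (constants = 0-ary function symbols) and
   predicate symbols are named by natural numbers. *)
Inductive term : Type :=
| Var : nat -> term
| Fn  : nat -> list term -> term.

Record atom : Type := mkAtom { pred : nat ; args : list term }.

Fixpoint subst (s : nat -> term) (t : term) : term :=
  match t with
  | Var v => s v
  | Fn f l => Fn f (map (subst s) l)
  end.

Definition subst_atom (s : nat -> term) (a : atom) : atom :=
  mkAtom (pred a) (map (subst s) (args a)).

Inductive var_occ (v : nat) : term -> Prop :=
| vo_here : var_occ v (Var v)
| vo_sub : forall g l t, In t l -> var_occ v t -> var_occ v (Fn g l).

Inductive sym_occ (f n : nat) : term -> Prop :=
| so_here : forall l, length l = n -> sym_occ f n (Fn f l)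
| so_sub : forall g l t, In t l -> sym_occ f n t -> sym_occ f n (Fn g l).

Definition var_occ_atom (v : nat) (a : atom) : Prop :=
  exists t, In t (args a) /\ var_occ v t.
Definition sym_occ_atom (f n : nat) (a : atom) : Prop :=
  exists t, In t (args a) /\ sym_occ f n t.

Record rule : Type := mkRule { head : atom ; pos : list atom ; neg : list atom }.

Definition subst_rule (s : nat -> term) (r : rule) : rule :=
  mkRule (subst_atom s (head r)) (map (subst_atom s) (pos r))
         (map (subst_atom s) (neg r)).

Definition rule_atom (r : rule) (a : atom) : Prop :=
  a = head r \/ In a (pos r) \/ In a (neg r).

Definition var_occ_rule (v : nat) (r : rule) : Prop :=
  exists a, rule_atom r a /\ var_occ_atom v a.

(* concept names and role names are (unary resp. binary) predicate symbols *)
Inductive concept : Type :=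
| CAtom : nat -> concept
| CTop : concept
| CBot : concept
| CNot : concept -> concept
| CAnd : concept -> concept -> concept
| COr : concept -> concept -> concept
| CEx : nat -> concept -> concept
| CAll : nat -> concept -> concept.

(* individuals are constants, i.e. 0-ary function symbols *)
Inductive axiom : Type :=
| Incl : concept -> concept -> axiom
| CAssert : concept -> nat -> axiom
| RAssert : nat -> nat -> nat -> axiom.

Record structure : Type := mkStructure {
  dom : Type ;
  dom_inh : dom ;
  fun_i : nat -> list dom -> dom ;
  pred_i : nat -> list dom -> Prop }.

Fixpoint eval (M : structure) (t : term) : dom M :=
  match t with
  | Var _ => dom_inh M   (* irrelevant: only used on ground terms *)
  | Fn f l => fun_i M f (map (eval M) l)
  end.

Definition holds (M : structure) (a : atom) : Prop :=
  pred_i M (pred a) (map (eval M) (args a)).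

(* semantics of the standard FO translation pi of ALC concepts *)
Fixpoint csem (M : structure) (C : concept) : dom M -> Prop :=
  match C with
  | CAtom A => fun x => pred_i M A [x]
  | CTop => fun _ => True
  | CBot => fun _ => False
  | CNot C => fun x => ~ csem M C x
  | CAnd C D => fun x => csem M C x /\ csem M D x
  | COr C D => fun x => csem M C x \/ csem M D x
  | CEx R C => fun x => exists y, pred_i M R [x; y] /\ csem M C y
  | CAll R C => fun x => forall y, pred_i M R [x; y] -> csem M C y
  end.

Definition sat_axiom (M : structure) (ax : axiom) : Prop :=
  match ax with
  | Incl C D => forall x, csem M C x -> csem M D x
  | CAssert C a => csem M C (fun_i M a [])
  | RAssert R a b => pred_i M R [fun_i M a []; fun_i M b []]
  end.

Record hkb : Type := mkHKB { ontology : list axiom ; program : list rule }.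

Definition models (M : structure) (O : list axiom) : Prop :=
  forall ax, In ax O -> sat_axiom M ax.

Definition entails (K : hkb) (S : atom -> Prop) (a : atom) : Prop :=
  forall M : structure, models M (ontology K) ->
    (forall b, S b -> holds M b) -> holds M a.

Definition entails_neg (K : hkb) (S : atom -> Prop) (a : atom) : Prop :=
  forall M : structure, models M (ontology K) ->
    (forall b, S b -> holds M b) -> ~ holds M a.

Definition axiom_const (ax : axiom) (c : nat) : Prop :=
  match ax with
  | Incl _ _ => False
  | CAssert _ a => c = a
  | RAssert _ a b => c = a \/ c = b
  end.

Definition sym_of (K : hkb) (f n : nat) : Prop :=
  (exists r a, In r (program K) /\ rule_atom r a /\ sym_occ_atom f n a)
  \/ (n = 0 /\ exists ax, In ax (ontology K) /\ axiom_const ax f).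

Inductive hterm (K : hkb) : term -> Prop :=
| ht_fn : forall f l, sym_of K f (length l) -> Forall (hterm K) l ->
          hterm K (Fn f l).

Definition ground_clause (K : hkb) (c : rule) : Prop :=
  exists r s, In r (program K) /\
    (forall v, var_occ_rule v r -> hterm K (s v)) /\ c = subst_rule s r.

Definition KA (K : hkb) (a : atom) : Prop :=
  exists c, ground_clause K c /\ rule_atom c a.

Record interp : Type := mkInterp { IT : atom -> Prop ; IF : atom -> Prop }.

Definition is_interp (K : hkb) (I : interp) : Prop :=
  (forall a, IT I a -> KA K a) /\ (forall a, IF I a -> KA K a) /\
  (forall a, IT I a -> IF I a -> False).

Definition subset (X Y : atom -> Prop) : Prop := forall a, X a -> Y a.

Definition ileq (I J : interp) : Prop :=
  subset (IT I) (IT J) /\ subset (IF I) (IF J).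

Definition Top (K : hkb) (I : interp) (Tr : atom -> Prop) (a : atom) : Prop :=
  KA K a /\
  ((exists c, ground_clause K c /\ head c = a /\
       (forall b, In b (pos c) -> IT I b \/ Tr b) /\
       (forall b, In b (neg c) -> IF I b))
   \/ entails K (fun b => IT I b \/ Tr b) a).

Definition Fop (K : hkb) (I : interp) (Fa : atom -> Prop) (a : atom) : Prop :=
  KA K a /\
  (entails_neg K (IT I) a \/
   (forall c, ground_clause K c -> head c = a ->
      (exists b, In b (pos c) /\ (IF I b \/ Fa b)) \/
      (exists b, In b (neg c) /\ IT I b))) /\
  ~ entails K (fun b => KA K b /\ ~ (IF I b \/ Fa b)) a.

(* Knaster-Tarski least / greatest fixpoints in the powerset lattice of U *)
Definition lfp (U : atom -> Prop) (f : (atom -> Prop) -> (atom -> Prop))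
  : atom -> Prop :=
  fun a => forall X, subset X U -> subset (f X) X -> X a.

Definition gfp (U : atom -> Prop) (f : (atom -> Prop) -> (atom -> Prop))
  : atom -> Prop :=
  fun a => exists X, subset X U /\ subset X (f X) /\ X a.

Definition IFP (K : hkb) (I : interp) : interp :=
  mkInterp (lfp (KA K) (Top K I)) (gfp (KA K) (Fop K I)).

(* Main.v *)
Require Import Defs.

Lemma entails_mono : forall K (S S' : atom -> Prop) a,
  (forall b, S b -> S' b) -> entails K S a -> entails K S' a.
Proof. unfold entails; intros K S S' a H E M HM HS. apply E; auto. Qed.

Lemma entails_neg_mono : forall K (S S' : atom -> Prop) a,
  (forall b, S b -> S' b) -> entails_neg K S a -> entails_neg K S' a.
Proof. unfold entails_neg; intros K S S' a H E M HM HS. apply E; auto. Qed.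

Theorem proposition4 : forall (K : hkb) (I I' : interp),
  is_interp K I -> is_interp K I' -> ileq I I' ->
  ileq (IFP K I) (IFP K I').
Proof.
  intros K I I' _ _ [HT HF]. split.
  - intros a Ha X HXU HX. apply Ha; [exact HXU|].
    unfold subset; intros b [HKA Hb]. apply HX. split; auto.
    destruct Hb as [[c [Hc [Hh [Hp Hn]]]] | He].
    + left. exists c. repeat split; auto.
      intros d Hd. destruct (Hp d Hd); auto.
    + right. eapply entails_mono; [|exact He].
      intros d [Hd|Hd]; auto.
  - intros a [X [HXU [HX Ha]]]. exists X. split; [exact HXU|split; [|exact Ha]].
    intros b Hb. destruct (HX b Hb) as [HKA [H2 H3]]. split; [auto|split].
    + destruct H2 as [H2|H2].
      * left. eapply entails_neg_mono; [|exact H2]. exact HT.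
      * right. intros c Hc Hh. destruct (H2 c Hc Hh) as [[d [Hd Hd']]|[d [Hd Hd']]].
        -- left. exists d. split; auto. destruct Hd'; auto.
        -- right. exists d. auto.
    + intro E. apply H3. eapply entails_mono; [|exact E].
      intros d [Hd1 Hd2]. split; auto. intros [Hd|Hd]; apply Hd2; auto.
Qed.
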